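(* The convex hull $\hat\Omega_n$ of the spectral ball $\Omega_n$ equals $\{A\in\mathcal M_n: |\operatorname{tr}(A)|<n\}$.
   Context: $\mathcal M_n$ is the space of complex $n\times n$ matrices; $r(A)$ denotes the spectral radius of $A$; $\Omega_n=\{A\in\mathcal M_n: r(A)<1\}$; $\operatorname{tr}$ is the trace. *)

(* Defs.v *)
From mathcomp Require Import all_boot all_order all_algebra.
From mathcomp Require Import complex.
From mathcomp Require Import reals.
Set Implicit Arguments. Unset Strict Implicit. Unset Printing Implicit Defensive.
Import Order.TTheory GRing.Theory Num.Theory.
Local Open Scope ring_scope.
Local Open Scope complex_scope.

Definition spectral_ball (R : realType) (n : nat) (A : 'M[R[i]]_n) : Prop :=
  forall l : R[i], eigenvalue A l -> `|l| < 1.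

Definition convex_hull (R : realType) (n : nat) (S : 'M[R[i]]_n -> Prop)
    (A : 'M[R[i]]_n) : Prop :=
  exists (k : nat) (t : 'I_k -> R) (B : 'I_k -> 'M[R[i]]_n),
    [/\ forall j, 0 <= t j,
        \sum_(j < k) t j = 1,
        forall j, S (B j) &
        A = \sum_(j < k) (t j)%:C *: B j].

(* Main.v *)
Require Import Defs.
From mathcomp Require Import all_boot all_order all_algebra.
From mathcomp Require Import complex.
From mathcomp Require Import reals.
From mathcomp Require Import ring.
Import Order.TTheory GRing.Theory Num.Theory.
Local Open Scope ring_scope.

Section Decomp.
Variables (F : numFieldType) (n : nat) (i0 : 'I_n) (M : 'M[F]_n).

Definition sgnb (b : bool) : F := if b then 1 else -1.
Definition colv (i : 'I_n) : 'cV[F]_n := delta_mx i 0.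
Definition rowv (i : 'I_n) : 'rV[F]_n := delta_mx 0 i.
Definition pa (x : 'I_n * 'I_n * bool) : 'cV[F]_n :=
  let: (i, j, b) := x in if i == j then colv i - sgnb b *: colv i0 else colv i.
Definition pb (x : 'I_n * 'I_n * bool) : 'rV[F]_n :=
  let: (i, j, b) := x in if i == j then rowv i + sgnb b *: rowv i0 else rowv j.
Definition Npc (x : 'I_n * 'I_n * bool) : 'M[F]_n :=
  (M x.1.1 x.1.2 / 2) *: (pa x *m pb x).

Lemma pbpa x : pb x *m pa x = 0.
Proof.
case: x => [[i j] b] /=; rewrite /colv /rowv.
case: eqVneq => [_|ij].
  rewrite mulmxDl !mulmxBr -!scalemxAl -!scalemxAr !mul_delta_mx_cond eqxx.
  rewrite scalerA; have -> : sgnb b * sgnb b = 1 by case: b; rewrite /= ?mulr1 ?mulrNN ?mulr1.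
  rewrite scale1r (eq_sym i0 i); case: (i == i0) => /=; rewrite ?mulr0n ?mulr1n ?scaler0;
  by rewrite eqxx mulr1n ?subrr ?addrA ?subrK ?subrr.
by rewrite mul_delta_mx_cond eq_sym (negPf ij) mulr0n.
Qed.

Lemma Npc_sq0 x : Npc x *m Npc x = 0.
Proof.
rewrite /Npc -scalemxAl -scalemxAr.
by have := pbpa x => h; rewrite mulmxA -(mulmxA (pa x)) h mulmx0 mul0mx !scaler0.
Qed.

Lemma gen4 (m : F) (a c : 'cV[F]_n) (r t : 'rV[F]_n) :
  (m / 2) *: ((a - c) *m (r + t)) + (m / 2) *: ((a - - c) *m (r + - t))
  = m *: (a *m r) - m *: (c *m t).
Proof.
rewrite opprK !(mulmxDr, mulmxBr, mulmxDl, mulmxBl, mulmxN, mulNmx).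
move: (a *m r) (a *m t) (c *m r) (c *m t) => x y z w.
apply/matrixP => p q; rewrite !mxE.
rewrite [in RHS](splitr m); set h := m / 2; ring.
Qed.

Lemma sum_Npc : \sum_(x : 'I_n * 'I_n * bool) Npc x = M - \tr M *: delta_mx i0 i0.
Proof.
have -> : \sum_(x : 'I_n * 'I_n * bool) Npc x =
    \sum_(i : 'I_n) \sum_(j : 'I_n) \sum_(b : bool) Npc (i, j, b).
  rewrite pair_bigA /= pair_bigA /=; apply: eq_bigr => -[[i j] b] //.
have h : forall i j, \sum_(b : bool) Npc (i, j, b) =
   M i j *: delta_mx i j - (if i == j then M i i *: delta_mx i0 i0 else 0).
  move=> i j; rewrite big_bool /Npc /pa /pb /= /colv /rowv.
  case: eqVneq => [<-|ij].
    by rewrite /sgnb !scale1r !scaleN1r gen4 !mul_delta_mx.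
  by rewrite subr0 -scalerDl -splitr mul_delta_mx.
under eq_bigr do under eq_bigr do rewrite h.
rewrite [X in _ = X - _]matrix_sum_delta.
under eq_bigr do rewrite sumrB.
rewrite sumrB; congr (_ - _).
under eq_bigr => i _ do rewrite -big_mkcond (big_pred1 i) ?(fun j => eq_sym i j) //.
by rewrite -scaler_suml.
Qed.
End Decomp.

Local Open Scope complex_scope.

Lemma tr_ball (R : realType) (n : nat) (hn : (0 < n)%N) (B : 'M[R[i]]_n) :
  spectral_ball B -> `|\tr B| < n%:R.
Proof.
move=> hB.
have [r hr] := closed_field_poly_normal (char_poly B).
rewrite (monicP (char_poly_monic B)) scale1r in hr.
have sr : size r = n.
  by have := size_char_poly B; rewrite hr size_prod_XsubC => -[].
have htr : \tr B = \sum_(z <- r) z.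
  apply: oppr_inj; rewrite -char_poly_trace // hr -coefPn_prod_XsubC ?sr //.
  by rewrite -lt0n.
have hr1 : forall z, z \in r -> `|z| < 1.
  move=> z zr; apply: hB; rewrite eigenvalue_root_char hr.
  by rewrite root_prod_XsubC.
rewrite htr; apply: le_lt_trans (ler_norm_sum _ _ _) _.
have -> : (n%:R : R[i]) = \sum_(z <- r) 1.
  by rewrite big_const_seq count_predT sr; elim: (n) => //= k <-; rewrite -natr1 addrC.
rewrite big_seq_cond [X in _ < X]big_seq_cond; apply: ltr_sum.
  by move: sr hr1; clear hr htr; case: r => [|z r'] /= sr; [move: hn; rewrite -sr | rewrite mem_head].
by move=> z /andP[zr _]; exact: hr1.
Qed.

Lemma eig_sq0 (F : fieldType) n (c s l : F) (N : 'M[F]_n) :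
  N *m N = 0 -> eigenvalue (c%:M + s *: N) l -> l = c.
Proof.
move=> hN /eigenvalueP [v hv nz].
have h1 : v *m (s *: N) = (l - c) *: v.
  by rewrite scalerBl -hv mulmxDr mul_mx_scalar addrC addKr.
have h2 : ((l - c) ^+ 2) *: v = 0.
  rewrite expr2 -scalerA -h1 scalemxAl -h1 -mulmxA -scalemxAl.

  by rewrite -(scalemxAr s N N) hN ?scaler0 ?scalemx0 mulmx0 ?scaler0.
move/eqP: h2; rewrite scaler_eq0 (negPf nz) orbF expf_eq0 /= subr_eq0.
by move/eqP.
Qed.

Lemma rank1_sq0 (F : fieldType) n (a : 'cV[F]_n) (b : 'rV[F]_n) :
  b *m a = 0 -> (a *m b) *m (a *m b) = 0.
Proof. by move=> h; rewrite mulmxA -(mulmxA a) h mulmx0 mul0mx. Qed.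

Theorem proposition4 (R : realType) (n : nat) (hn : (0 < n)%N) (A : 'M[R[i]]_n) :
  convex_hull (@spectral_ball R n) A <-> `|\tr A| < n%:R.
Proof.
have n0 : (n%:R : R[i]) != 0 by rewrite pnatr_eq0 -lt0n.
split.
  move=> [k [t [B [t0 t1 hB ->]]]].
  set s := fun j => (t j)%:C.
  have s0 : forall j, 0 <= s j by move=> j; rewrite /s ler0c.
  have s1 : \sum_j s j = 1 by rewrite /s -rmorph_sum t1.
  rewrite raddf_sum /=.
  under eq_bigr do rewrite mxtraceZ.
  apply: le_lt_trans (ler_norm_sum _ _ _) _.
  under eq_bigr do rewrite normrM (ger0_norm (s0 _)).
  rewrite -[n%:R]mul1r -{1}s1 mulr_suml -subr_gt0 -sumrB.
  have hp : forall j : 'I_k, 0 <= s j * n%:R - s j * `|\tr (B j)|.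
    by move=> j; rewrite -mulrBr mulr_ge0 // subr_ge0 ltW // tr_ball.
  rewrite lt_def sumr_ge0 // ?andbT; apply/negP => /eqP /psumr_eq0P => hz.
  have : \sum_j s j = 0.
    apply: big1 => j _; move: (hz (fun i _ => hp i) j isT) => /eqP; rewrite -mulrBr mulf_eq0.
    by rewrite subr_eq0 (gt_eqF (@tr_ball R n hn _ (hB j))) orbF => /eqP.
  by rewrite s1 => /eqP; rewrite oner_eq0.
move=> htr.
pose T := ('I_n * 'I_n * bool)%type.
pose K := #|{: T}|.
have K0 : (0 < K)%N by rewrite /K !card_prod !card_ord card_bool !muln_gt0 hn.
have K0' : (K%:R : R[i]) != 0 by rewrite pnatr_eq0 -lt0n.
pose c := \tr A / n%:R.
pose M := A - c%:M.
pose i0 := Ordinal hn.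
have trM : \tr M = 0.
  by rewrite /M raddfB /= mxtrace_scalar -mulr_natr /c divfK // subrr.
have hsum := @sum_Npc _ n i0 M; rewrite trM scale0r subr0 in hsum.
exists K, (fun _ => (K%:R)^-1), (fun j => c%:M + (K%:R : R[i]) *: (@Npc _ n i0 M) (enum_val j)).
split.
- by move=> _; rewrite invr_ge0 ler0n.
- by rewrite sumr_const card_ord -[_ *+ K]mulr_natr mulVf // pnatr_eq0 -lt0n.
- move=> j l hl; rewrite (@eig_sq0 _ _ _ _ _ _ (Npc_sq0 _ _ _ _ _) hl) /c normrM normfV normr_nat.
  by rewrite ltr_pdivrMr ?mul1r // ltr0n.
- rewrite -(big_enum_val (fun x => ((K%:R)^-1)%:C *: (c%:M + (K%:R : R[i]) *: (@Npc _ n i0 M) x))).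
  have hk : (K%:R^-1)%:C = ((K%:R : R[i]))^-1 by rewrite fmorphV rmorph_nat.
  rewrite hk.
  under eq_bigr do rewrite scalerDr scalerA mulVf // scale1r.
  rewrite big_split /= sumr_const -/K.
  rewrite (eq_bigl (fun _ => true)) // hsum.
  rewrite scalerMnl -mulr_natr mulVf // scale1r.
  by rewrite /M addrC subrK.
Qed.
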